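(* Consider a clinical activity network built from a finite set of activities as follows: each activity $v$ is represented by a start node $v^s$ and an end node $v^e$ joined by an arc $(v^s,v^e)$; the other arcs are of the form $(u^e,v^s)$ (possibly $u=v$), $(\mathrm{START},v^s)$ or $(v^e,\mathrm{END})$, where START and END are two artificial nodes (we write $\mathrm{START}^e=\mathrm{START}$ and $\mathrm{END}^s=\mathrm{END}$). Let $\mathbf{c}^*\in\mathbb{R}^n$ be arc costs. A sequence of activities $(\nu_1,\dots,\nu_k)$ corresponds to the walk $\mathrm{START}\to\nu_1^s\to\nu_1^e\to\cdots\to\nu_k^s\to\nu_k^e\to\mathrm{END}$ (assumed to use only arcs of the network), and its flow vector counts the number of traversals of each arc. Let $\mathbf{x}^*$ be a shortest START–END path under $\mathbf{c}^*$, given by the activity sequence $(\gamma_1,\dots,\gamma_K)$; set $\gamma_0=\mathrm{START}$, $\gamma_{K+1}=\mathrm{END}$. Let $\hat{\mathbf{x}}$ be a patient pathway whose activity sequence is written as $(\Delta_0,\Gamma_1,\Delta_1,\Gamma_2,\dots,\Gamma_K,\Delta_K)$ (between START and END), where each $\Gamma_i\in\{\emptyset,\gamma_i\}$, each $\Delta_i$ is a (possibly empty) finite sequence of activities, and $\Delta_i=\emptyset$ whenever $\Gamma_i=\emptyset$ ($1\le i\le K$). Let $\Gamma_0=\gamma_0$, $\Gamma_{K+1}=\gamma_{K+1}$. For each pair of indices $i<i+l$ with $\Gamma_i=\gamma_i$, $\Gamma_{i+l}=\gamma_{i+l}$ and $\Gamma_{i+1}=\dots=\Gamma_{i+l-1}=\emptyset$,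 if $l>1$ or $\Delta_i\neq\emptyset$, this gap is called a detour $\theta$ (from $\gamma_i$ to $\gamma_{i+l}$, with discordant activities $\Delta_i$). Define its cost $$C(\theta)=\frac{E(\theta)-F(\theta)}{M(\hat{\mathbf{x}})-\mathbf{c}^{*\top}\mathbf{x}^*},$$ where $E(\theta)$ is the total $\mathbf{c}^*$-cost of the arcs of the patient walk from $\gamma_i^e$ to $\gamma_{i+l}^s$ (i.e. $c^*_{\gamma_i^e\delta_1^s}+\phi(\Delta_i)+c^*_{\delta_k^e\gamma_{i+l}^s}$ if $\Delta_i=(\delta_1,\dots,\delta_k)\ne\emptyset$, and $c^*_{\gamma_i^e\gamma_{i+l}^s}$ if $\Delta_i=\emptyset$), and $F(\theta)$ is the total $\mathbf{c}^*$-cost of the arcs of the reference walk $\mathbf{x}^*$ from $\gamma_i^e$ to $\gamma_{i+l}^s$ (i.e. $c^*_{\gamma_i^e\gamma_{i+1}^s}+\phi((\gamma_{i+1},\dots,\gamma_{i+l-1}))+c^*_{\gamma_{i+l-1}^e\gamma_{i+l}^s}$ for $l>1$, and $c^*_{\gamma_i^e\gamma_{i+1}^s}$ for $l=1$). Here $\phi((\nu_1,\dots,\nu_k))=\sum_{j=1}^{k-1}c^*_{\nu_j^e\nu_{j+1}^s}+\sum_{j=1}^k c^*_{\nu_j^s\nu_j^e}$, and $M(\hat{\mathbf{x}})=\max\{\mathbf{c}^{*\top}\mathbf{x}: \mathbf{x}$ is the flow vector of a START–END walk with $\|\mathbf{x}\|_1\le\|\hat{\mathbf{x}}\|_1\}$,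 assumed to differ from $\mathbf{c}^{*\top}\mathbf{x}^*$. Let $\Theta$ be the set of all detours of $\hat{\mathbf{x}}$, and let $\omega(\hat{\mathbf{x}})=1-\dfrac{\mathbf{c}^{*\top}\hat{\mathbf{x}}-\mathbf{c}^{*\top}\mathbf{x}^*}{M(\hat{\mathbf{x}})-\mathbf{c}^{*\top}\mathbf{x}^*}$. Then $$\omega(\hat{\mathbf{x}})=1-\sum_{\theta\in\Theta}C(\theta).$$
   Context: $\omega(\hat{\mathbf{x}})$ is the concordance score of the patient pathway $\hat{\mathbf{x}}$; in the paper $\mathbf{c}^*$ is an arc cost vector obtained by inverse optimization, and $\mathbf{x}^*$ is a reference (concordant) pathway assumed to be a shortest path under $\mathbf{c}^*$. $\Gamma_i$ marks whether the concordant activity $\gamma_i$ appears in its place in the patient pathway, and $\Delta_i$ are the extra (discordant) activities occurring after it. *)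

(* Defs.v *)
From HB Require Import structures.
From mathcomp Require Import all_boot all_order all_algebra.
Set Implicit Arguments. Unset Strict Implicit. Unset Printing Implicit Defensive.
Import Order.TTheory GRing.Theory Num.Theory.
Local Open Scope ring_scope.

(* Nodes of the clinical activity network over a set A of activities:
   START, END, and for each activity v a start node Sn v (= v^s) and an
   end node En v (= v^e). *)
Inductive node (A : Type) := START | END | Sn of A | En of A.
Arguments START {A}. Arguments END {A}.

Section Network.
Variables (A : eqType) (R : numDomainType).

Definition allowed_arc (a b : node A) : bool :=
  match a, b with
  | Sn u, En v => u == v
  | En _, Sn _ => true
  | START, Sn _ => true
  | En _, END => true
  | _, _ => false
  end.

Definition is_network (net : rel (node A)) : Prop :=
  (forall a b, net a b -> allowed_arc a b) /\ (forall v, net (Sn v) (En v)).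

Definition walk_nodes (s : seq A) : seq (node A) :=
  START :: rcons (flatten [seq [:: Sn v; En v] | v <- s]) END.

Definition valid_walk (net : rel (node A)) (s : seq A) : bool :=
  path net START (rcons (flatten [seq [:: Sn v; En v] | v <- s]) END).

Fixpoint nodes_cost (c : node A -> node A -> R) (l : seq (node A)) : R :=
  match l with
  | x :: ((y :: _) as t) => c x y + nodes_cost c t
  | _ => 0
  end.

(* c^T x where x is the flow vector (arc traversal counts) of the walk. *)
Definition walk_cost (c : node A -> node A -> R) (s : seq A) : R :=
  nodes_cost c (walk_nodes s).

(* ||x||_1 of the flow vector = number of arc traversals = 2k+1. *)
Definition walk_l1 (s : seq A) : nat := (2 * size s + 1)%N.

Definition phi (c : node A -> node A -> R) (s : seq A) : R :=
  \sum_(p <- zip s (behead s)) c (En p.1) (Sn p.2)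
  + \sum_(v <- s) c (Sn v) (En v).

Definition gap_cost (c : node A -> node A -> R) (a b : node A) (s : seq A) : R :=
  match s with
  | [::] => c a b
  | d :: _ => c a (Sn d) + phi c s + c (En (last d s)) b
  end.

Section Pathway.
Variables (gamma : seq A) (present : nat -> bool) (delta : nat -> seq A).

Definition KK := size gamma.

(* Patient activity sequence (Delta_0, Gamma_1, Delta_1, ..., Gamma_K, Delta_K),
   Gamma_i = gamma_i if present i, empty otherwise (1 <= i <= K). *)
Definition patient_seq : seq A :=
  delta 0 ++ flatten [seq (if present p.1 then [:: p.2] else [::]) ++ delta p.1
                     | p <- zip (iota 1 KK) gamma].

Definition pres (i : nat) : bool :=
  (i == 0)%N || (i == KK.+1) || ((1 <= i <= KK)%N && present i).

Definition next_pres (i : nat) : nat :=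
  (i.+1 + find pres (iota i.+1 (KK.+1 - i)))%N.

(* gamma_i^e (with gamma_0^e = START) and gamma_j^s (with gamma_{K+1}^s = END). *)
Definition ref_e (i : nat) : node A :=
  if i == 0%N then START else nth START [seq En v | v <- gamma] i.-1.
Definition ref_s (j : nat) : node A :=
  nth END [seq Sn v | v <- gamma] j.-1.

Definition is_detour (i : nat) : bool :=
  pres i && ((1 < next_pres i - i)%N || (delta i != [::])).

Variables (c : node A -> node A -> R).

Definition E_cost (i : nat) : R := gap_cost c (ref_e i) (ref_s (next_pres i)) (delta i).
Definition F_cost (i : nat) : R :=
  gap_cost c (ref_e i) (ref_s (next_pres i)) (take (next_pres i - i).-1 (drop i gamma)).

End Pathway.
End Network.

(* Main.v *)
Require Import Defs.
From HB Require Import structures.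
From mathcomp Require Import all_boot all_order all_algebra.
From mathcomp Require Import ring zify.
Import Order.TTheory GRing.Theory Num.Theory.
Local Open Scope ring_scope.
Set Implicit Arguments. Unset Strict Implicit.

Section Gen.
Variables (A : eqType) (R : numDomainType) (c : node A -> node A -> R).

Definition nds (s : seq A) : seq (node A) := flatten [seq [:: Sn v; En v] | v <- s].

Lemma nds_cat s t : nds (s ++ t) = nds s ++ nds t.
Proof. by rewrite /nds map_cat flatten_cat. Qed.

Lemma nc_cons2 x y l : nodes_cost c (x :: y :: l) = c x y + nodes_cost c (y :: l).
Proof. by []. Qed.

Lemma nc_cat l1 x l2 :
  nodes_cost c (l1 ++ x :: l2) = nodes_cost c (rcons l1 x) + nodes_cost c (x :: l2).
Proof.
elim: l1 => [|a l1 IH] /=; first by rewrite add0r.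
case: l1 IH => [|b l1] IH /=; first by rewrite addr0.
by rewrite -addrA -IH.
Qed.

Lemma gap_nodes a b s : gap_cost c a b s = nodes_cost c (a :: rcons (nds s) b).
Proof.
elim: s a => [|d s IH] a; first by rewrite /= addr0.
have -> : nodes_cost c (a :: rcons (nds (d :: s)) b) =
  c a (Sn d) + (c (Sn d) (En d) + nodes_cost c (En d :: rcons (nds s) b)) by [].
rewrite -IH /=.
case: s {IH} => [|d' s] /=.
  by rewrite /phi /= big_nil big_cons big_nil !add0r addr0 addrA.
rewrite /phi /= !big_cons /=.
ring.
Qed.

Lemma cost_split a b s v t :
  nodes_cost c (a :: rcons (nds (s ++ v :: t)) b) =
  gap_cost c a (Sn v) s + c (Sn v) (En v) + nodes_cost c (En v :: rcons (nds t) b).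
Proof.
rewrite nds_cat rcons_cat.
have -> : rcons (nds (v :: t)) b = Sn v :: En v :: rcons (nds t) b by [].
by rewrite -cat_cons nc_cat gap_nodes nc_cons2 addrA.
Qed.

End Gen.

Section Glob.
Variables (A : eqType) (R : numDomainType) (c : node A -> node A -> R)
  (gamma : seq A) (present : nat -> bool) (delta : nat -> seq A).
Hypothesis Hd : forall i, (1 <= i <= size gamma)%N -> ~~ present i -> delta i = [::].
Local Notation K := (size gamma).
Local Notation pres := (pres gamma present).
Local Notation next_pres := (next_pres gamma present).

Lemma presP k : (1 <= k <= K)%N -> pres k = present k.
Proof.
move=> /andP[h1 h2]; rewrite /Defs.pres /KK h1 h2 /=.
rewrite (_ : (k == 0)%N = false); last by apply/negbTE/eqP; lia.
rewrite (_ : (k == K.+1)%N = false) //; by apply/negbTE/eqP; lia.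
Qed.

Lemma next_presP i : (i <= K)%N ->
  [/\ (i < next_pres i <= K.+1)%N, pres (next_pres i)
    & forall k, (i < k < next_pres i)%N -> ~~ pres k].
Proof.
move=> hi; rewrite /Defs.next_pres /KK.
set s := iota i.+1 (K.+1 - i).
have hs : has pres s.
  apply/hasP; exists K.+1; last by rewrite /Defs.pres /KK eqxx orbT.
  rewrite mem_iota; lia.
have hf := hs; rewrite has_find size_iota in hf.
split.
- lia.
- by have := nth_find 0%N hs; rewrite nth_iota.
- move=> k hk; have h : (k - i.+1 < find pres s)%N by lia.
  have := before_find 0%N h; rewrite nth_iota; last by lia.
  have -> : (i.+1 + (k - i.+1) = k)%N by lia.
  by move=> ->.
Qed.

Definition PT i := flatten [seq (if present p.1 then [:: p.2] else [::]) ++ delta p.1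
                     | p <- zip (iota i.+1 (K - i)) (drop i gamma)].

Lemma PT_K : PT K = [::].
Proof. by rewrite /PT subnn; case: (drop _ _). Qed.

Lemma PT0 : patient_seq gamma present delta = delta 0%N ++ PT 0%N.
Proof. by rewrite /patient_seq /PT drop0 subn0. Qed.

Lemma PT_step x0 i : (i < K)%N ->
  PT i = ((if present i.+1 then [:: nth x0 gamma i] else [::]) ++ delta i.+1) ++ PT i.+1.
Proof.
move=> h; rewrite /PT (drop_nth x0 h).
by rewrite (_ : (K - i = (K - i.+1).+1)%N); last by lia.
Qed.

Lemma PT_skip i j : (i < j)%N -> (j <= K.+1)%N ->
  (forall k, (i < k < j)%N -> ~~ pres k) -> PT i = PT j.-1.
Proof.
move=> hij hj hk.
have H : forall n, (i + n < j)%N -> PT i = PT (i + n).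
  elim=> [|n IH] h; first by rewrite addn0.
  rewrite IH; last by lia.
  have hn : (i + n < K)%N by lia.
  have [x0 _] : exists x : A, True by case: (gamma) hn => [|x ?] //; exists x.
  have hp := hk (i + n).+1 ltac:(lia).
  rewrite presP in hp; last by lia.
  have hd : delta (i + n).+1 = [::] by apply: Hd => //; lia.
  by rewrite (PT_step x0 hn) (negbTE hp) hd addnS.
rewrite -subn1 (H (j - 1 - i)%N); [congr PT; lia | lia].
Qed.

Lemma ref_s_in x0 j : (1 <= j <= K)%N -> ref_s gamma j = Sn (nth x0 gamma j.-1).
Proof. by move=> h; rewrite /ref_s (nth_map x0) //; lia. Qed.

Lemma ref_s_end : ref_s gamma K.+1 = END.
Proof. by rewrite /ref_s nth_default // size_map. Qed.

Lemma ref_e_in x0 j : (1 <= j <= K)%N -> ref_e gamma j = En (nth x0 gamma j.-1).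
Proof.
move=> h; rewrite /ref_e (_ : (j == 0)%N = false); last by apply/negbTE/eqP; lia.
by rewrite (nth_map x0) //; lia.
Qed.


Local Notation D k := (E_cost gamma present delta c k - F_cost gamma present c k).

Lemma Q n i : (K - i < n)%N -> (i <= K)%N -> pres i ->
  nodes_cost c (ref_e gamma i :: rcons (nds (delta i ++ PT i)) END)
  - nodes_cost c (ref_e gamma i :: rcons (nds (drop i gamma)) END)
  = \sum_(k <- iota i (K.+1 - i) | is_detour gamma present delta k) D k.
Proof.
elim: n i => [|n IH] i hn hi hpi; first by lia.
have [hij hpj hbet] := next_presP hi.
set j := next_pres i in hij hpj hbet *.
have Hsum : \sum_(k <- iota i (K.+1 - i) | is_detour gamma present delta k) D k =
   (if is_detour gamma present delta i then D i else 0)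
   + \sum_(k <- iota j (K.+1 - j) | is_detour gamma present delta k) D k.
  have -> : (K.+1 - i = 1 + ((j - i.+1) + (K.+1 - j)))%N by lia.
  rewrite iotaD big_cat iotaD big_cat /=.
  rewrite (_ : (i + 1 + (j - i.+1) = j)%N); last by lia.
  rewrite big_cons big_nil.
  have hz : \sum_(k <- iota (i + 1) (j - i.+1) | is_detour gamma present delta k) D k = 0.
    apply: big1_seq => k /andP[hk]; rewrite mem_iota => hk2.
    by move: hk; rewrite /is_detour (negbTE (hbet k _)) //; lia.
  by rewrite hz add0r addr0.
have HD : (if is_detour gamma present delta i then D i else 0) =
   gap_cost c (ref_e gamma i) (ref_s gamma j) (delta i)
   - gap_cost c (ref_e gamma i) (ref_s gamma j) (take (j - i).-1 (drop i gamma)).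
  rewrite /E_cost /F_cost -/j.
  case hd : is_detour; first by [].
  move: hd; rewrite /is_detour hpi /= -/j => /norP[h1 /negPn/eqP h2].
  by rewrite h2 (_ : (j - i).-1 = 0)%N ?take0 ?subrr //; lia.
rewrite Hsum HD.
have [hjK | hjK] : (j <= K)%N \/ j = K.+1 by lia.
  have [x0 _] : exists x : A, True by case: (gamma) hjK hij => [|x ?] /= h1 h2; [lia | exists x].
  set g := nth x0 gamma j.-1.
  have hj1 : (1 <= j <= K)%N by lia.
  have hpres : present j by rewrite -presP.
  have hj0 : (0 < j)%N by lia.
  have hjp : (j.-1 < K)%N by rewrite -subn1; lia.
  have -> : PT i = g :: (delta j ++ PT j).
    rewrite (@PT_skip i j _ _ hbet); try lia.
    by rewrite (PT_step x0 hjp) prednK // hpres.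
  have Hdr : drop i gamma = take (j - i).-1 (drop i gamma) ++ g :: drop j gamma.
    rewrite -[in LHS](cat_take_drop (j - i).-1 (drop i gamma)) drop_drop.
    rewrite (_ : ((j - i).-1 + i = j.-1)%N); last by rewrite -!subn1; lia.
    by rewrite (drop_nth x0 hjp) prednK.
  rewrite {1}Hdr !cost_split.
  rewrite (ref_s_in x0 hj1) -/g.
  have := IH j ltac:(lia) hjK hpj.
  rewrite (ref_e_in x0 hj1) -/g => <-.
  ring.
- have hPT : PT i = [::].
    rewrite (@PT_skip i j _ _ hbet); try lia.
    by rewrite hjK /= PT_K.
  rewrite hPT cats0 hjK ref_s_end subnn /= big_nil addr0.
  rewrite (_ : ((K.+1 - i).-1 = K - i)%N); last by rewrite -!subn1; lia.
  rewrite take_oversize ?size_drop // !gap_nodes.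
  by [].
Qed.

End Glob.

Theorem theorem1 (A : finType) (R : realFieldType)
  (net : rel (node A)) (c : node A -> node A -> R)
  (gamma : seq A) (present : nat -> bool) (delta : nat -> seq A) (M : R) :
  is_network net ->
  (* x* (activity sequence gamma) is a shortest START-END path under c *)
  valid_walk net gamma -> uniq gamma ->
  (forall s, valid_walk net s -> walk_cost c gamma <= walk_cost c s) ->
  (* patient pathway structure *)
  (forall i, (1 <= i <= size gamma)%N -> ~~ present i -> delta i = [::]) ->
  valid_walk net (patient_seq gamma present delta) ->
  (* M(xhat) = max { c^T x : x a START-END walk with ||x||_1 <= ||xhat||_1 } *)
  (exists s, [/\ valid_walk net s,
     (walk_l1 s <= walk_l1 (patient_seq gamma present delta))%N & walk_cost c s = M]) ->
  (forall s, valid_walk net s ->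
     (walk_l1 s <= walk_l1 (patient_seq gamma present delta))%N -> walk_cost c s <= M) ->
  M != walk_cost c gamma ->
  1 - (walk_cost c (patient_seq gamma present delta) - walk_cost c gamma)
        / (M - walk_cost c gamma)
  = 1 - \sum_(i <- iota 0 (size gamma).+1 | is_detour gamma present delta i)
          (E_cost gamma present delta c i - F_cost gamma present c i)
            / (M - walk_cost c gamma).
Proof.
move=> _ _ _ _ Hd _ _ _ _.
rewrite -mulr_suml; congr (1 - _ * _).
have h0 : (size gamma - 0 < (size gamma).+1)%N by rewrite subn0.
have := Q c Hd h0 (leq0n _) isT.
rewrite subn0 drop0 -PT0 => <-.
by [].
Qed.
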